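(* Let $K$ be a number field and $G\subseteq K^*$ a subgroup. Then there exists a unique subring $S\subseteq K$, minimal with respect to inclusion, such that for every finite non-empty subset $Y\subseteq G$ the $S$-submodule $SY$ of $K$ generated by $Y$ is an invertible ideal of $S$ within $K$. Moreover, this $S$ is an order.
   Context: For a subring $S$ of a field $K$, an invertible ideal of $S$ within $K$ is an $S$-submodule $I\subseteq K$ for which there exists an $S$-submodule $J\subseteq K$ with $IJ=S$ ($IJ$ the set of finite sums of products). An order is a domain whose additive group is isomorphic to $\mathbb{Z}^n$ for some $n\ge0$. *)

(* Defs.v *)
(* A number field is a finite-dimensional field extension of Q:
   K : fieldExtType rat. Subsets of K are predicates. *)
From HB Require Import structures.
From mathcomp Require Import all_boot all_order all_algebra all_field.
Set Implicit Arguments. Unset Strict Implicit. Unset Printing Implicit Defensive.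
Import GRing.Theory Num.Theory.
Local Open Scope ring_scope.

Section Defs.
Variable K : fieldExtType rat.

Definition is_mult_subgroup (G : {pred K}) : Prop :=
  (forall x, x \in G -> x != 0) /\ 1 \in G /\
  (forall x y, x \in G -> y \in G -> x * y \in G) /\
  (forall x, x \in G -> x^-1 \in G).

Definition is_subring (S : {pred K}) : Prop := subring_closed S.

Definition is_submodule (S : {pred K}) (I : K -> Prop) : Prop :=
  I 0 /\ (forall x y, I x -> I y -> I (x + y)) /\
  (forall s x, s \in S -> I x -> I (s * x)).

Definition gen_submodule (S : {pred K}) (Y : seq K) : K -> Prop :=
  fun x => exists s : 'I_(size Y) -> K,
    (forall i, s i \in S) /\ x = \sum_(i < size Y) s i * Y`_i.

Definition prod_set (I J : K -> Prop) : K -> Prop :=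
  fun x => exists (n : nat) (a b : 'I_n -> K),
    (forall i, I (a i) /\ J (b i)) /\ x = \sum_(i < n) a i * b i.

Definition invertible_ideal (S : {pred K}) (I : K -> Prop) : Prop :=
  is_submodule S I /\
  exists J : K -> Prop, is_submodule S J /\
    forall x, prod_set I J x <-> x \in S.

Definition all_gen_invertible (G S : {pred K}) : Prop :=
  forall Y : seq K, Y != [::] -> all (mem G) Y ->
    invertible_ideal S (gen_submodule S Y).

(* S is an order: (a subring of K, hence a domain) whose additive group is
   isomorphic to Z^n, i.e. S has a Z-basis b_1..b_n *)
Definition is_order (S : {pred K}) : Prop :=
  exists (n : nat) (b : 'I_n -> K),
    (forall i, b i \in S) /\
    (forall c : 'I_n -> int, \sum_(i < n) b i *~ c i = 0 -> forall i, c i = 0) /\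
    (forall x, x \in S -> exists c : 'I_n -> int, x = \sum_(i < n) b i *~ c i).
End Defs.

(* Main.v *)
Require Import Defs.
From HB Require Import structures.
From mathcomp Require Import all_boot all_order all_algebra all_field.
From mathcomp Require Import ring.
From Stdlib Require Import ClassicalEpsilon Classical.
Set Implicit Arguments. Unset Strict Implicit. Unset Printing Implicit Defensive.
Import GRing.Theory Num.Theory.
Local Open Scope ring_scope.

Section SR.
Variable K : fieldExtType rat.
Variable T : {pred K}.
Hypothesis hT : is_subring T.

Lemma sr1 : 1 \in T. Proof. by case: hT. Qed.
Lemma srB x y : x \in T -> y \in T -> x - y \in T. Proof. by case: hT => _ h _; apply: h. Qed.
Lemma srM x y : x \in T -> y \in T -> x * y \in T. Proof. by case: hT => _ _ h; apply: h. Qed.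
Lemma sr0 : 0 \in T. Proof. by rewrite -(subrr 1) srB ?sr1. Qed.
Lemma srN x : x \in T -> - x \in T. Proof. by move=> h; rewrite -sub0r srB ?sr0. Qed.
Lemma srD x y : x \in T -> y \in T -> x + y \in T.
Proof. by move=> hx hy; rewrite -[y]opprK srB ?srN. Qed.
Lemma srMn x n : x \in T -> x *+ n \in T.
Proof. by move=> hx; elim: n => [|n IH]; rewrite ?mulr0n ?sr0 // mulrS srD. Qed.
Lemma srMz x z : x \in T -> x *~ z \in T.
Proof. by move=> hx; case: z => n; [exact: srMn | rewrite NegzE mulrNz; apply: srN; exact: srMn]. Qed.
Lemma srint z : z%:~R \in T. Proof. exact: srMz sr1. Qed.
Lemma srX x n : x \in T -> x ^+ n \in T.
Proof. by move=> hx; elim: n => [|n IH]; rewrite ?expr0 ?sr1 // exprS srM. Qed.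
Lemma srsum I (r : seq I) (P : pred I) (F : I -> K) :
  (forall i, P i -> F i \in T) -> \sum_(i <- r | P i) F i \in T.
Proof. by move=> h; apply: (big_ind (fun x => x \in T)) => //; [exact: sr0 | exact: srD]. Qed.
End SR.

Section Split.
Variable K : fieldExtType rat.

Definition splits (T : {pred K}) (a : K) := exists u v,
  [/\ u \in T, v \in T, u + v = 1, u * a \in T & v * a^-1 \in T].

Definition span (T : {pred K}) k (f : 'I_k -> K) : K -> Prop :=
  fun x => exists t : 'I_k -> K, (forall i, t i \in T) /\ x = \sum_(i < k) t i * f i.

Lemma span_sub T k (f : 'I_k -> K) : is_subring T -> is_submodule T (span T f).
Proof.
move=> hT; split; [|split].
- exists (fun _ => 0); split=> [i|]; first exact: sr0.
  by rewrite big1 // => i _; rewrite mul0r.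
- move=> x y [s [hs ->]] [t [ht ->]]; exists (fun i => s i + t i); split.
    by move=> i; apply: srD.
  by rewrite -big_split; apply: eq_bigr => i _; rewrite mulrDl.
- move=> c x hc [s [hs ->]]; exists (fun i => c * s i); split.
    by move=> i; apply: srM.
  by rewrite mulr_sumr; apply: eq_bigr => i _; rewrite mulrA.
Qed.

Lemma span_gen T k (f : 'I_k -> K) i : is_subring T -> span T f (f i).
Proof.
move=> hT; exists (fun j => (j == i)%:R); split.
  by move=> j; case: (j == i); [exact: sr1 | exact: sr0].
rewrite (bigD1 i) //= eqxx mul1r big1 ?addr0 // => j /negbTE ->.
by rewrite mul0r.
Qed.

Lemma prod_in (I J : K -> Prop) x y : I x -> J y -> prod_set I J (x * y).
Proof.
move=> hx hy; exists 1%N, (fun _ => x), (fun _ => y); split=> //.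
by rewrite big_ord1.
Qed.

Lemma valid_splits (G T : {pred K}) : is_mult_subgroup G -> is_subring T ->
  all_gen_invertible G T -> forall a, a \in G -> splits T a.
Proof.
move=> [G0 [G1 _]] hT hinv a aG.
have a0 := G0 a aG.
have hY : all (mem G) [:: 1; a] by rewrite /= G1 aG.
have [_ [J [_ HJ]]] := hinv [:: 1; a] isT hY.
have I1 : gen_submodule T [:: 1; a] 1.
  exact: (@span_gen T 2 (fun i => [:: 1; a]`_i) ord0 hT).
have Ia : gen_submodule T [:: 1; a] a.
  exact: (@span_gen T 2 (fun i => [:: 1; a]`_i) (lift ord0 ord0) hT).
have: prod_set (gen_submodule T [:: 1; a]) J 1 by apply/HJ; exact: sr1.
move=> [n [A [B [hAB E]]]].
pose Q z := exists p q, [/\ p \in T, q \in T, p * a \in T, q * a^-1 \in T & z = p + q].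
suff [p [q [hp hq hpa hqa Ez]]] : Q 1 by exists p, q; split.
rewrite E; apply: (big_ind Q).
- exists 0, 0; rewrite !mul0r addr0; split=> //; exact: sr0.
- move=> _ _ [p1 [q1 [h1 h2 h3 h4 ->]]] [p2 [q2 [h5 h6 h7 h8 ->]]].
  exists (p1 + p2), (q1 + q2); rewrite !mulrDl; split; try exact: srD.
  by rewrite addrACA.
- move=> i _; have [[s [hs ->]] hB] := hAB i.
  have hB1 : B i \in T by apply/HJ; rewrite -[B i]mul1r; apply: prod_in.
  have hBa : a * B i \in T by apply/HJ; apply: prod_in.
  rewrite big_ord_recl big_ord1 /=.
  exists (s ord0 * B i), (s (lift ord0 ord0) * (a * B i)); split.
  + by apply: srM.
  + by apply: srM.
  + by rewrite mulrAC -mulrA srM.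
  + have -> : s (lift ord0 ord0) * (a * B i) * a^-1 = s (lift ord0 ord0) * B i.
      by field.
    by apply: srM.
  + rewrite mulr1 mulrDl; congr (_ + _); ring.
Qed.


Lemma partition_inv (T : {pred K}) (Y : seq K) (w : nat -> K) :
  is_subring T -> (forall i, (i < size Y)%N -> Y`_i != 0) ->
  (forall i, w i \in T) -> \sum_(i < size Y) w i = 1 ->
  (forall i l, (i < size Y)%N -> (l < size Y)%N -> w i * Y`_l / Y`_i \in T) ->
  invertible_ideal T (gen_submodule T Y).
Proof.
move=> hT Y0 wT wsum wY; split.
  exact: (@span_sub T (size Y) (fun i => Y`_i) hT).
exists (@span T (size Y) (fun i => w i / Y`_i)); split; first exact: span_sub.
move=> x; split.
- move=> [n [A [B [hAB ->]]]]; apply: srsum => // i _.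
  have [[s [hs ->]] [t [ht ->]]] := hAB i.
  rewrite mulr_suml; apply: srsum => // l _; rewrite mulr_sumr.
  apply: srsum => // j _.
  have -> : s l * Y`_l * (t j * (w j / Y`_j)) = (s l * t j) * (w j * Y`_l / Y`_j).
    by rewrite !mulrA; ring.
  by apply: srM => //; [apply: srM | apply: wY].
- move=> xT; exists (size Y), (fun i => x * Y`_i), (fun i => w i / Y`_i).
  split.
    move=> i; split.
      exists (fun j => if j == i then x else 0); split.
        by move=> j; case: (j == i) => //; exact: sr0.
      rewrite (bigD1 i) //= eqxx big1 ?addr0 // => j /negbTE ->.
      by rewrite mul0r.
    exists (fun j => (j == i)%:R); split.
      by move=> j; case: (j == i); [exact: sr1 | exact: sr0].
    rewrite (bigD1 i) //= eqxx mul1r big1 ?addr0 // => j /negbTE ->.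
    by rewrite mul0r.
  rewrite -[LHS]mulr1 -wsum mulr_sumr; apply: eq_bigr => i _.
  have := Y0 i (ltn_ord i) => h; field; exact: h.
Qed.

Lemma partition_exists (G T : {pred K}) : is_mult_subgroup G -> is_subring T ->
  (forall a, a \in G -> splits T a) ->
  forall Y : seq K, Y != [::] -> all (mem G) Y ->
  exists w : nat -> K, [/\ forall i, w i \in T, \sum_(i < size Y) w i = 1 &
    forall i l, (i < size Y)%N -> (l < size Y)%N -> w i * Y`_l / Y`_i \in T].
Proof.
move=> [G0 [G1 [GM GV]]] hT hs; elim=> [//|y Y' IH] _ /andP[yG Y'G].
have y0 := G0 y yG.
have Y'0 : forall j, (j < size Y')%N -> Y'`_j != 0.
  by move=> j hj; apply: G0; move/allP: Y'G; apply; rewrite mem_nth.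
have [->|Y'n] := eqVneq Y' [::].
  exists (fun _ => 1); split=> [i|| ].
  - exact: sr1.
  - by rewrite big_ord1.
  - by case=> // [] [] // _ _ /=; rewrite mul1r divff // sr1.
have [w' [w'T w'sum w'Y]] := IH Y'n Y'G.
have hc : forall i, exists uv : K * K, [/\ uv.1 \in T, uv.2 \in T &
    (i < size Y')%N -> [/\ uv.1 + uv.2 = 1, uv.1 * (y / Y'`_i) \in T &
      uv.2 * (y / Y'`_i)^-1 \in T]].
  move=> i; case: (ltnP i (size Y')) => hi; last first.
    exists (0, 0); split; [exact: sr0 | exact: sr0 | ]; by [] .
  have : y / Y'`_i \in G.
    by apply: GM => //; apply: GV; move/allP: Y'G; apply; rewrite mem_nth.
  move/hs => [u [v [hu hv huv h1 h2]]]; exists (u, v); split=> //.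
pose uv i := proj1_sig (constructive_indefinite_description _ (hc i)).
have huv : forall i, [/\ (uv i).1 \in T, (uv i).2 \in T &
    (i < size Y')%N -> [/\ (uv i).1 + (uv i).2 = 1, (uv i).1 * (y / Y'`_i) \in T &
      (uv i).2 * (y / Y'`_i)^-1 \in T]] :=
  fun i => proj2_sig (constructive_indefinite_description _ (hc i)).
exists (fun i => if i is i'.+1 then w' i' * (uv i').1
                 else \sum_(j < size Y') w' j * (uv j).2); split.
- case=> [|i]; last by apply: srM => //; case: (huv i).
  by apply: srsum => // j _; apply: srM => //; case: (huv j).
- rewrite /= big_ord_recl /=.
  rewrite -(big_split _ _ _ _ _) /= -w'sum; apply: eq_bigr => j _.
  rewrite -mulrDr addrC; have [_ _ /(_ (ltn_ord j)) [-> _ _]] := huv j.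
  by rewrite mulr1.
- case=> [|i]; case=> [|l] /=; rewrite ?ltnS => hi hl.
  + by rewrite mulfK //; apply: srsum => // j _; apply: srM => //; case: (huv j).
  + rewrite !mulr_suml; apply: srsum => // j _.
    have [_ _ /(_ (ltn_ord j)) [_ _ h2]] := huv j.
    have := Y'0 j (ltn_ord j) => hj.
    have -> : w' j * (uv j).2 * Y'`_l / y =
        (w' j * Y'`_l / Y'`_j) * ((uv j).2 * (y / Y'`_j)^-1).
      by field; rewrite hj y0.
    by apply: srM => //; apply: w'Y.
  + have [_ _ /(_ hi) [_ h1 _]] := huv i.
    rewrite -mulrA -mulrA; apply: srM => //; by rewrite mulrA.
  + have [h1 _ _] := huv i.
    have -> : w' i * (uv i).1 * Y'`_l / Y'`_i = (w' i * Y'`_l / Y'`_i) * (uv i).1.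
      by ring.
    by apply: srM => //; apply: w'Y.
Qed.

Lemma splits_valid (G T : {pred K}) : is_mult_subgroup G -> is_subring T ->
  (forall a, a \in G -> splits T a) -> all_gen_invertible G T.
Proof.
move=> hG hT hs Y Yn YG.
have [w [wT wsum wY]] := partition_exists hG hT hs Yn YG.
apply: partition_inv wT wsum wY => // i hi.
by case: hG => G0 _; apply: G0; move/allP: YG; apply; rewrite mem_nth.
Qed.

End Split.

Section PolyMem.
Variable K : fieldExtType rat.

Definition Zpol (b x : K) := exists p : {poly int}, x = (map_poly (intr : int -> K) p).[b].

Lemma size_mapZ (p : {poly int}) : (size (map_poly (intr : int -> K) p) <= size p)%N.
Proof. exact: size_poly. Qed.

Lemma Zpol_pow_mem (T : {pred K}) (c b : K) (p : {poly int}) N :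
  is_subring T -> c \in T -> c * b \in T -> (size p <= N)%N ->
  c ^+ N * (map_poly (intr : int -> K) p).[b] \in T.
Proof.
move=> hT hc hcb hN.
rewrite (horner_coef_wide _ (leq_trans (size_mapZ p) hN)) mulr_sumr.
apply: srsum => // i _; rewrite coef_map /=.
have hi : (i <= N)%N by apply: ltnW.
have -> : c ^+ N * ((p`_i)%:~R * b ^+ i) = (p`_i)%:~R * (c ^+ (N - i) * (c * b) ^+ i).
  by rewrite exprMn -{1}(subnK hi) exprD; ring.
by apply: srM => //; [exact: (srint hT) | apply: srM => //; apply: srX].
Qed.

Lemma Zpol_split_mem (T : {pred K}) (a u v x : K) :
  is_subring T -> u \in T -> v \in T -> u + v = 1 -> u * a \in T -> v * a^-1 \in T ->
  Zpol a x -> Zpol a^-1 x -> x \in T.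
Proof.
move=> hT hu hv huv hua hva [p Ep] [q Eq].
pose N := (size p + size q)%N.
have hU : u ^+ N * x \in T by rewrite Ep; apply: Zpol_pow_mem => //; rewrite leq_addr.
have hV : v ^+ N * x \in T by rewrite Eq; apply: Zpol_pow_mem => //; rewrite leq_addl.
rewrite -[x]mul1r -(expr1n K (N + N)%N) -huv exprDn mulr_suml.
apply: srsum => // i _.
rewrite mulrnAl; apply: (srMn hT).
case: (leqP i N) => hi.
  have -> : u ^+ (N + N - i) * v ^+ i * x = u ^+ (N - i) * v ^+ i * (u ^+ N * x).
    rewrite -addnBA // exprD; ring.
  by apply: srM => //; apply: srM => //; apply: srX.
have hiN : (i <= N + N)%N by rewrite -ltnS ltn_ord.
have -> : u ^+ (N + N - i) * v ^+ i * x = u ^+ (N + N - i) * v ^+ (i - N) * (v ^+ N * x).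
  have -> : v ^+ i = v ^+ (i - N) * v ^+ N by rewrite -exprD subnK // ltnW.
  ring.
by apply: srM => //; apply: srM => //; apply: srX.
Qed.

End PolyMem.

Section Integral.
Variable K : fieldExtType rat.
Local Notation intK := (intr : int -> K).
Definition integ (x : K) := integralOver intK x.

Lemma integ_add x y : integ x -> integ y -> integ (x + y).
Proof. exact: integral_add. Qed.
Lemma integ_mul x y : integ x -> integ y -> integ (x * y).
Proof. exact: integral_mul. Qed.
Lemma integ_opp x : integ x -> integ (- x).
Proof. exact: integral_opp. Qed.
Lemma integ_int z : integ z%:~R.
Proof. exact: integral_id. Qed.

Lemma integ_lead (c b : K) (d : nat -> int) k :
  integ c -> c * b ^+ k + \sum_(i < k) (d i)%:~R * b ^+ i = 0 -> integ (c * b).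
Proof.
move=> hc; case: k => [|k] E.
  move: E; rewrite big_ord0 expr0 mulr1 addr0 => ->; rewrite mul0r.
  exact: (integ_int 0).
pose q := \poly_(i < k.+1) ((d i)%:~R * c ^+ (k - i)) : {poly K}.
have szq : (size q <= k.+1)%N by apply: size_poly.
pose P := 'X^(k.+1) + q.
have monP : P \is monic.
  rewrite monicE /P lead_coefDl ?lead_coefXn // size_polyXn //.
apply: (integral_root_monic monP).
  rewrite /root /P hornerD hornerXn (horner_coef_wide _ szq).
  have -> : \sum_(i < k.+1) q`_i * (c * b) ^+ i =
            c ^+ k * \sum_(i < k.+1) (d i)%:~R * b ^+ i.
    rewrite mulr_sumr; apply: eq_bigr => i _; rewrite coef_poly ltn_ord.
    rewrite exprMn; have hi : (i <= k)%N by rewrite -ltnS.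
    have -> : c ^+ k = c ^+ (k - i) * c ^+ i by rewrite -exprD subnK.
    ring.
  have -> : (c * b) ^+ k.+1 = c ^+ k * (c * b ^+ k.+1) by rewrite exprMn exprS; ring.
  by rewrite -mulrDr E mulr0.
apply/integral_poly => i; rewrite coefD coefXn coef_poly.
case: (ltnP i k.+1) => hi.
  rewrite (_ : (i == k.+1) = false) ?add0r; last by rewrite ltn_eqF.
  apply: integ_mul; first exact: integ_int.
  elim: (k - i)%N => [|j IH]; first by rewrite expr0; exact: (integ_int 1).
  by rewrite exprS; apply: integ_mul.
by rewrite addr0; case: (i == k.+1); [exact: (integ_int 1) | exact: (integ_int 0)].
Qed.


Lemma intK_eq0 (z : int) : (intK z == 0) = (z == 0).
Proof.
have -> : intK z = in_alg K (z%:~R : rat) by rewrite rmorph_int.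
by rewrite fmorph_eq0 intr_eq0.
Qed.

Lemma bezout_coefs (p : {poly int}) N : exists c : nat -> int,
  \sum_(i < N) c i * p`_i = (\big[gcdn/0%N]_(i < N) `|(p`_i)%R|%N)%:Z.
Proof.
elim: N => [|N [c Ec]]; first by exists (fun _ => 0); rewrite !big_ord0.
have [u [v Euv]] := Bezoutz (\big[gcdn/0%N]_(i < N) `|(p`_i)%R|%N)%:Z p`_N.
exists (fun i => if (i < N)%N then u * c i else v).
rewrite big_ord_recr big_ord_recr /= ltnn.
have -> : (gcdn (\big[gcdn/0%N]_(i < N) `|(p`_i)%R|%N) `|p`_N|)%:Z = gcdz (\big[gcdn/0%N]_(i < N) `|(p`_i)%R|%N)%:Z p`_N by rewrite /gcdz absz_nat.
rewrite -Euv -Ec mulr_sumr.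
congr (_ + _); apply: eq_bigr => i _; rewrite ltn_ord; ring.
Qed.

Lemma int_relation (a : K) : exists q : {poly int},
  [/\ q != 0, (map_poly intK q).[a] = 0 &
      exists c : nat -> int, \sum_(i < size q) c i * q`_i = 1].
Proof.
have := minPolyOver 1%AS a; move/polyOver1P => [q0 Eq0].
have := root_minPoly 1%AS a; rewrite Eq0 => rq0.
have q0n : q0 != 0.
  apply/eqP => q00; move: Eq0; rewrite q00 map_poly0 => /eqP.
  by rewrite -size_poly_eq0 size_minPoly.
have [z [d d0 Ez]] := rat_poly_scale q0.
have zn : z != 0 by apply: contraNneq q0n => z0; rewrite Ez z0 map_poly0 scaler0.
have rz : (map_poly intK z).[a] = 0.
  move: rq0; rewrite Ez map_polyZ /= -map_poly_comp /root hornerZ mulf_eq0.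
  rewrite scaler_eq0 oner_eq0 orbF invr_eq0 intr_eq0 (negbTE d0) /=.
  have -> : map_poly (in_alg K \o intr) z = map_poly intK z.
    by apply: eq_map_poly => w /=; exact: (rmorph_int (in_alg K)).
  by move/eqP.
pose pz := zprimitive z.
exists pz; split.
- by rewrite zprimitive_eq0.
- move: rz; rewrite {1}(zpolyEprim z) map_polyZ /= hornerZ => /eqP.
  by rewrite mulf_eq0 intK_eq0 zcontents_eq0 (negbTE zn) /= => /eqP.
- have [c Ec] := bezout_coefs pz (size pz); exists c; rewrite Ec.
  have := zcontents_primitive z; rewrite zn /zcontents.
  set g := \big[gcdn/0%N]_(i < size pz) _.
  move=> /(congr1 (fun w : int => `|w|%N)) /=.
  rewrite abszM absz_nat => /eqP; rewrite muln_eq1 => /andP[_ /eqP ->] //.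
Qed.

End Integral.

Section Good.
Variable K : fieldExtType rat.
Local Notation intK := (intr : int -> K).

Lemma Zpol_int (b : K) z : Zpol b (z%:~R).
Proof. by exists z%:P; rewrite map_polyC hornerC. Qed.
Lemma Zpol_X (b : K) : Zpol b b.
Proof. by exists 'X; rewrite map_polyX hornerX. Qed.
Lemma Zpol_add (b x y : K) : Zpol b x -> Zpol b y -> Zpol b (x + y).
Proof. by move=> [p ->] [q ->]; exists (p + q); rewrite rmorphD hornerD. Qed.
Lemma Zpol_opp (b x : K) : Zpol b x -> Zpol b (- x).
Proof. by move=> [p ->]; exists (- p); rewrite rmorphN hornerN. Qed.
Lemma Zpol_mul (b x y : K) : Zpol b x -> Zpol b y -> Zpol b (x * y).
Proof. by move=> [p ->] [q ->]; exists (p * q); rewrite rmorphM hornerM. Qed.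
Lemma Zpol_exp (b x : K) n : Zpol b x -> Zpol b (x ^+ n).
Proof.
move=> h; elim: n => [|n IH]; first by rewrite expr0; exact: (Zpol_int b 1).
by rewrite exprS; apply: Zpol_mul.
Qed.

Lemma integ0 : integ (0 : K). Proof. exact: integral0. Qed.
Lemma integ1 : integ (1 : K). Proof. exact: integral1. Qed.

Definition Good (a x : K) := [/\ Zpol a x, Zpol a^-1 x & integ x].

Lemma Good_int a z : Good a (z%:~R).
Proof. by split; [exact: Zpol_int | exact: Zpol_int | exact: integ_int]. Qed.
Lemma Good_add a x y : Good a x -> Good a y -> Good a (x + y).
Proof.
by move=> [h1 h2 h3] [h4 h5 h6]; split; [exact: Zpol_add | exact: Zpol_add | exact: integ_add].
Qed.
Lemma Good_opp a x : Good a x -> Good a (- x).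
Proof. by move=> [h1 h2 h3]; split; [exact: Zpol_opp | exact: Zpol_opp | exact: integ_opp]. Qed.
Lemma Good_mul a x y : Good a x -> Good a y -> Good a (x * y).
Proof.
by move=> [h1 h2 h3] [h4 h5 h6]; split; [exact: Zpol_mul | exact: Zpol_mul | exact: integ_mul].
Qed.
Lemma Good_sum a I (r : seq I) (P : pred I) (F : I -> K) :
  (forall i, P i -> Good a (F i)) -> Good a (\sum_(i <- r | P i) F i).
Proof.
move=> h; apply: (big_ind (Good a)) => //; first exact: (Good_int a 0).
exact: Good_add.
Qed.

Section Construction.
Variable a : K.
Hypothesis a0 : a != 0.
Variable q : {poly int}.
Hypothesis rq : (map_poly intK q).[a] = 0.
Variable c : nat -> int.
Hypothesis Ec : \sum_(i < size q) c i * q`_i = 1.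

Let N := size q.
Let t i := (q`_i)%:~R * a ^+ i.
Let e m := \sum_(i < N) (if (m <= i)%N then (q`_i)%:~R * a ^+ (i - m) else 0).

Lemma K0 : \sum_(i < N) t i = 0.
Proof.
rewrite -[RHS]rq (horner_coef_wide _ (size_mapZ K q)).
by apply: eq_bigr => i _; rewrite coef_map.
Qed.

Lemma K1 m : a ^+ m * e m = \sum_(i < N) (if (m <= i)%N then t i else 0).
Proof.
rewrite mulr_sumr; apply: eq_bigr => i _; case: ifP => h; last by rewrite mulr0.
rewrite /t; have -> : a ^+ i = a ^+ (i - m) * a ^+ m by rewrite -exprD subnK.
ring.
Qed.

Lemma K1' m : a ^+ m * \sum_(i < N) (if (i < m)%N then (q`_i)%:~R * a^-1 ^+ (m - i) else 0)
   = \sum_(i < N) (if (i < m)%N then t i else 0).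
Proof.
rewrite mulr_sumr; apply: eq_bigr => i _; case: ifP => h; last by rewrite mulr0.
have hi : (i <= m)%N by apply: ltnW.
rewrite /t; have -> : a ^+ m = a ^+ (m - i) * a ^+ i by rewrite -exprD subnK.
rewrite exprVn.
have : a ^+ (m - i) != 0 by rewrite expf_neq0.
move=> hne; field; exact: hne.
Qed.

Lemma e_inv m : e m = - \sum_(i < N) (if (i < m)%N then (q`_i)%:~R * a^-1 ^+ (m - i) else 0).
Proof.
apply: (mulfI (expf_neq0 m a0)); rewrite mulrN K1 K1'; apply/eqP; rewrite -addr_eq0.
rewrite -big_split /=; apply/eqP; rewrite -[RHS]K0; apply: eq_bigr => i _.
by case: (ltnP i m) => h; rewrite ?addr0 ?add0r.
Qed.

Lemma e_Zp m : Zpol a (e m).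
Proof.
apply: (big_ind (Zpol a)); [exact: (Zpol_int a 0) | exact: Zpol_add |] => i _.
case: ifP => _; last exact: (Zpol_int a 0).
by apply: Zpol_mul; [exact: Zpol_int | apply: Zpol_exp; exact: Zpol_X].
Qed.

Lemma e_Zpinv m : Zpol a^-1 (e m).
Proof.
rewrite e_inv; apply: Zpol_opp.
apply: (big_ind (Zpol a^-1)); [exact: (Zpol_int _ 0) | exact: Zpol_add |] => i _.
case: ifP => _; last exact: (Zpol_int _ 0).
by apply: Zpol_mul; [exact: Zpol_int | apply: Zpol_exp; exact: Zpol_X].
Qed.

Lemma e_big m : (N <= m)%N -> e m = 0.
Proof.
move=> h; apply: big1 => i _; case: ifP => // hm.
by move: (leq_trans h hm); rewrite leqNgt ltn_ord.
Qed.

Lemma K2 m : (m < N)%N -> e m = (q`_m)%:~R + a * e m.+1.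
Proof.
move=> hm; rewrite /e mulr_sumr (bigD1 (Ordinal hm)) //= leqnn subnn expr0 mulr1.
rewrite [X in _ = _ + X](bigD1 (Ordinal hm)) //= ltnn mulr0 add0r.
congr (_ + _); apply: eq_bigr => i hi.
have hne : (nat_of_ord i != m) by move: hi; apply: contraNneq => h; apply/eqP/val_inj.
rewrite ltn_neqAle (eq_sym m) hne /=; case: ifP => //= h.
  have hlt : (m < i)%N by rewrite ltn_neqAle eq_sym hne h.
  rewrite -(subnSK hlt) exprS; ring.
by rewrite mulr0.
Qed.

Lemma e0 : e 0 = 0.
Proof. by rewrite -[e 0]mul1r -(expr0 a) K1 -[RHS]K0; apply: eq_bigr. Qed.

Lemma e_integ m : integ (e m).
Proof.
have : (N - m <= N - m)%N by [].
move: {2}(N - m)%N => k; elim: k m => [|k IH] m hk.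
  by rewrite e_big; [exact: integ0 | rewrite -subn_eq0 -leqn0].
case: (leqP N m) => hm; first by rewrite e_big //; exact: integ0.
rewrite K2 //; apply: integ_add; first exact: integ_int.
have he : integ (e m.+1) by apply: IH; rewrite subnS -ltnS prednK ?subn_gt0.
rewrite mulrC; apply: (integ_lead (d := fun i => q`_i) (k := m.+1) he).
rewrite mulrC K1 (big_ord_widen N (fun i => (q`_i)%:~R * a ^+ i) hm).
rewrite [X in _ + X]big_mkcond /=.
rewrite -big_split /= -[RHS]K0; apply: eq_bigr => i _.
by rewrite /t ltnS; case: (ltnP m i) => h; rewrite ?addr0 ?add0r.
Qed.

Lemma e_good m : Good a (e m).
Proof. by split; [exact: e_Zp | exact: e_Zpinv | exact: e_integ]. Qed.

Lemma good_split_aux : exists u v,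
  [/\ Good a u, Good a v, u + v = 1, Good a (u * a) & Good a (v * a^-1)].
Proof.
pose u := \sum_(m < N) (c m)%:~R * e m.
have hu : Good a u by apply: Good_sum => m _; apply: Good_mul; [exact: Good_int | exact: e_good].
have Ec' : \sum_(m < N) (c m)%:~R * (q`_m)%:~R = 1 :> K.
  have := congr1 intK Ec; rewrite rmorph_sum /= => E1; rewrite -[RHS](mulr1z 1) -E1.
  by apply: eq_bigr => i _; rewrite intrM.
have hv : 1 - u = - \sum_(m < N) (c m)%:~R * (a * e m.+1).
  rewrite -{1}Ec' -sumrB -sumrN; apply: eq_bigr => m _.
  by rewrite (K2 (ltn_ord m)); ring.
exists u, (1 - u); split.
- exact: hu.
- by apply: Good_add; [exact: (Good_int a 1) | exact: Good_opp].
- by rewrite addrC subrK.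
- rewrite /u mulr_suml; apply: Good_sum => m _; rewrite -mulrA; apply: Good_mul.
    exact: Good_int.
  case: m => [[|m] hm] /=.
    by rewrite e0 mul0r; exact: (Good_int a 0).
  rewrite mulrC; have -> : a * e m.+1 = e m - (q`_m)%:~R.
    by rewrite (K2 (ltnW hm)) addrC addKr.
  by apply: Good_add; [exact: e_good | apply: Good_opp; exact: Good_int].
- rewrite hv mulNr mulr_suml; apply: Good_opp; apply: Good_sum => m _.
  have -> : (c m)%:~R * (a * e m.+1) * a^-1 = (c m)%:~R * e m.+1.
    by field.
  by apply: Good_mul; [exact: Good_int | exact: e_good].
Qed.

End Construction.

Lemma good_split (a : K) : a != 0 -> exists u v,
  [/\ Good a u, Good a v, u + v = 1, Good a (u * a) & Good a (v * a^-1)].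
Proof.
move=> a0; have [q [_ rq [c Ec]]] := int_relation a.
exact: (@good_split_aux a a0 q rq c Ec).
Qed.

End Good.

Definition pb (P : Prop) : bool := if excluded_middle_informative P then true else false.
Lemma pbP (P : Prop) : pb P <-> P.
Proof. by rewrite /pb; case: excluded_middle_informative. Qed.

Definition join (T : Type) n (f : 'I_n -> T) (t : T) : 'I_n.+1 -> T :=
  fun i => if unlift ord_max i is Some j then f j else t.

Lemma join_max T n (f : 'I_n -> T) t : join f t ord_max = t.
Proof. by rewrite /join unlift_none. Qed.

Lemma lift_widen n (i : 'I_n) : lift ord_max i = widen_ord (leqnSn n) i.
Proof. by apply: val_inj; rewrite /= /bump leqNgt ltn_ord. Qed.

Lemma join_widen T n (f : 'I_n -> T) t i : join f t (widen_ord (leqnSn n) i) = f i.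
Proof. by rewrite -lift_widen /join liftK. Qed.

Section Hermite.
Variable V : zmodType.

Definition lin n (b : 'I_n -> V) (c : 'I_n -> int) := \sum_(i < n) b i *~ c i.
Definition zindep n (b : 'I_n -> V) := forall c, lin b c = 0 -> forall i, c i = 0.

Lemma lin_join n (b : 'I_n.+1 -> V) (c : 'I_n -> int) k :
  lin b (join c k) = lin (fun i => b (widen_ord (leqnSn n) i)) c + b ord_max *~ k.
Proof.
rewrite /lin big_ord_recr /= join_max; congr (_ + _).
by apply: eq_bigr => i _; rewrite join_widen.
Qed.

Lemma lin_split n (b : 'I_n.+1 -> V) (c : 'I_n.+1 -> int) :
  lin b c = lin (fun i => b (widen_ord (leqnSn n) i)) (fun i => c (widen_ord (leqnSn n) i))
            + b ord_max *~ c ord_max.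
Proof. by rewrite /lin big_ord_recr. Qed.

Lemma lin_add n (b : 'I_n -> V) c1 c2 : lin b c1 + lin b c2 = lin b (fun i => c1 i + c2 i).
Proof. by rewrite /lin -big_split; apply: eq_bigr => i _; rewrite mulrzDr. Qed.

Lemma lin_opp n (b : 'I_n -> V) c : - lin b c = lin b (fun i => - c i).
Proof. by rewrite /lin -sumrN; apply: eq_bigr => i _; rewrite mulrNz. Qed.

Lemma lin_mulz n (b : 'I_n -> V) c k : lin b c *~ k = lin b (fun i => c i * k).
Proof. by rewrite /lin mulrz_suml; apply: eq_bigr => i _; rewrite mulrzA. Qed.

Lemma lin0 n (b : 'I_n -> V) : lin b (fun _ => 0) = 0.
Proof. by rewrite /lin big1 // => i _; rewrite mulr0z. Qed.

Lemma lin_delta n (b : 'I_n -> V) j : lin b (fun i => (i == j)%:R) = b j.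
Proof.
rewrite /lin (bigD1 j) //= eqxx mulr1z big1 ?addr0 // => i /negbTE ->.
by rewrite mulr0z.
Qed.

Lemma lin_ext n (b1 b2 : 'I_n -> V) c : b1 =1 b2 -> lin b1 c = lin b2 c.
Proof. by move=> h; apply: eq_bigr => i _; rewrite h. Qed.

Lemma lin_join2 n (f : 'I_n -> V) t (c : 'I_n -> int) k :
  lin (join f t) (join c k) = lin f c + t *~ k.
Proof.
rewrite lin_join join_max; congr (_ + _); apply: lin_ext => i.
by rewrite join_widen.
Qed.

Lemma zindep_coord n (b : 'I_n -> V) c1 c2 : zindep b -> lin b c1 = lin b c2 -> c1 =1 c2.
Proof.
move=> hb E i; apply/eqP; rewrite -subr_eq0; apply/eqP.
apply: (hb (fun i => c1 i - c2 i)); rewrite -lin_add -lin_opp E subrr //.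
Qed.

Lemma hermite (n : nat) : forall (H : V -> Prop) (b : 'I_n -> V),
  H 0 -> (forall x y, H x -> H y -> H (x - y)) -> zindep b ->
  (forall x, H x -> exists c, x = lin b c) ->
  exists m (e : 'I_m -> V), [/\ forall i, H (e i), zindep e &
     forall x, H x -> exists c, x = lin e c].
Proof.
elim: n => [|n IH] H b H0 HB hb hspan.
  exists 0%N, b; split=> //; by case.
pose b' := fun i : 'I_n => b (widen_ord (leqnSn n) i).
pose bl := b ord_max.
have hb' : zindep b'.
  move=> c Ec i; have := hb (join c 0); rewrite lin_join Ec mulr0z addr0 => /(_ erefl).
  by move/(_ (widen_ord (leqnSn n) i)); rewrite join_widen.
have coordu : forall c1 c2 k1 k2, lin b' c1 + bl *~ k1 = lin b' c2 + bl *~ k2 ->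
    k1 = k2 /\ c1 =1 c2.
  move=> c1 c2 k1 k2 E; rewrite -!lin_join in E.
  have := zindep_coord hb E => h; split; first by have := h ord_max; rewrite !join_max.
  by move=> i; have := h (widen_ord (leqnSn n) i); rewrite !join_widen.
have HN x : H x -> H (- x) by move=> hx; rewrite -sub0r; apply: HB.
have HD x y : H x -> H y -> H (x + y) by move=> hx hy; rewrite -[y]opprK; apply: HB => //; apply: HN.
have HZ x k : H x -> H (x *~ k).
  move=> hx; have HMn j : H (x *+ j).
    by elim: j => [|j IHj]; rewrite ?mulr0n ?mulrS //; apply: HD.
  by case: k => k; [exact: HMn | rewrite NegzE mulrNz; apply: HN; exact: HMn].
pose H' x := H x /\ exists c, x = lin b' c.
have [m [e' [He' ie' se']]] : exists m (e : 'I_m -> V), [/\ forall i, H' (e i), zindep e &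
     forall x, H' x -> exists c, x = lin e c].
  apply: (IH H' b') => //.
  - by split => //; exists (fun _ => 0); rewrite lin0.
  - move=> x y [hx [c1 Ex]] [hy [c2 Ey]]; split; first by apply: HB.
    by exists (fun i => c1 i + - c2 i); rewrite Ex Ey lin_opp lin_add.
  - by move=> x [_ h].
pose L (k : int) := exists x, H x /\ exists c, x = lin b' c + bl *~ k.
have [allz | ] := excluded_middle_informative (forall k, L k -> k = 0).
  exists m, e'; split => //; first by move=> i; case: (He' i).
  move=> x hx; apply: se'; split => //.
  have [c Ec] := hspan x hx; rewrite lin_split in Ec.
  have := allz (c ord_max); rewrite -/bl -/b'.
  move=> /(_ (ex_intro _ x (conj hx (ex_intro _ _ Ec)))) hz.
  by exists (fun i => c (widen_ord (leqnSn n) i)); rewrite Ec hz mulr0z addr0.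
move=> /not_all_ex_not [k0 hk]; have [Lk0 /eqP k0nz] := imply_to_and _ _ hk.
have LN k : L k -> L (- k).
  move=> [x [hx [c Ex]]]; exists (- x); split; first exact: HN.
  by exists (fun i => - c i); rewrite Ex opprD lin_opp mulrNz.
have Lpos : exists k : nat, (0 < k)%N && pb (L k%:Z).
  exists `|k0|%N; rewrite absz_gt0 (negPf k0nz) /=; apply/pbP.
  by case: (ltrP 0 k0) => h; [rewrite gtz0_abs | rewrite lez0_abs //; apply: LN].
case: (ex_minnP Lpos) => d /andP[d0 /pbP [h0 [hh0 [c0 Eh0]]]] dmin.
have [C hC] : exists C : 'I_m -> 'I_n -> int, forall i, e' i = lin b' (C i).
  have hc i : exists c, e' i = lin b' c by have [_ [c Ec]] := He' i; exists c.
  exists (fun i => proj1_sig (constructive_indefinite_description _ (hc i))).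
  by move=> i; exact: (proj2_sig (constructive_indefinite_description _ (hc i))).
have lin_comp k : lin e' k = lin b' (fun j => \sum_i C i j * k i).
  rewrite /lin; under eq_bigr => i _ do rewrite hC /lin mulrz_suml.
  rewrite exchange_big /=; apply: eq_bigr => j _; rewrite mulrz_sumr.
  by apply: eq_bigr => i _; rewrite mulrzA.
have dnz : (d%:Z != 0) by rewrite eqz_nat -lt0n.
exists m.+1, (join e' h0); split.
- move=> i; rewrite /join; case: unlift => [j|] //; by case: (He' j).
- move=> c Ec.
  have E1 : lin e' (fun i => c (widen_ord (leqnSn m) i)) + h0 *~ c ord_max = 0.
    rewrite -Ec lin_split join_max; congr (_ + _); apply: lin_ext => i.
    by rewrite join_widen.
  have E1' := E1.
  rewrite lin_comp Eh0 mulrzDl -mulrzA lin_mulz addrA lin_add in E1.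
  have E2 : lin b' (fun j => (\sum_i C i j * c (widen_ord (leqnSn m) i)) + c0 j * c ord_max)
      + bl *~ (d%:Z * c ord_max) = lin b' (fun _ => 0) + bl *~ 0.
    by rewrite lin0 mulr0z addr0.
  have [/eqP hdc _] := coordu _ _ _ _ E2.
  have hcm : c ord_max = 0 by move: hdc; rewrite mulf_eq0 (negPf dnz) /= => /eqP.
  have hw : forall j, c (widen_ord (leqnSn m) j) = 0.
    by apply: ie'; move: E1'; rewrite hcm mulr0z addr0.
  move=> i; case: (unliftP ord_max i) => [j ->|->] //.
  by rewrite lift_widen hw.
- move=> x hx; have [c Ec] := hspan x hx; rewrite lin_split -/b' -/bl in Ec.
  set c' := fun i => c (widen_ord (leqnSn n) i) in Ec; set k := c ord_max in Ec.
  pose q := (k %/ d%:Z)%Z; pose r := (k %% d%:Z)%Z.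
  have Ekr : k = q * d%:Z + r by exact: divz_eq.
  have Ey : x - h0 *~ q = lin b' (fun j => c' j + - (c0 j * q)) + bl *~ r.
    rewrite Ec Eh0 mulrzDl -mulrzA lin_mulz {1}Ekr mulrzDr.
    rewrite -lin_add -lin_opp (mulrC d%:Z q); rewrite opprD; rewrite addrACA.
    by rewrite [bl *~ (q * _) + _]addrC addrK.
  have hy : H (x - h0 *~ q) by apply: HB => //; apply: HZ.
  have r0 : r = 0.
    apply/eqP; apply/negPn/negP => rnz.
    have r_ge0 : 0 <= r by apply: modz_ge0.
    have r_lt : r < d%:Z by have := ltz_mod k dnz.
    have Lr : L r by exists (x - h0 *~ q); split => //; exists (fun j => c' j + - (c0 j * q)).
    have : (d <= `|r|)%N.
      apply: dmin; rewrite absz_gt0 rnz /=; apply/pbP; by rewrite gez0_abs.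
    by rewrite -lez_nat gez0_abs // => h; move: (Order.POrderTheory.le_lt_trans h r_lt); rewrite Order.POrderTheory.ltxx.
  have [c'' Ec''] : exists c'', x - h0 *~ q = lin e' c''.
    apply: se'; split => //; exists (fun j => c' j + - (c0 j * q)).
    by rewrite Ey r0 mulr0z addr0.
  exists (join c'' q); rewrite lin_join2 -Ec''.
  by rewrite subrK.
Qed.
End Hermite.
Import VectorInternalTheory.

Section Trace.
Variable K : fieldExtType rat.
Local Notation n := (dim K).
Local Notation intK := (intr : int -> K).

Definition bb (i : 'I_n) : K := r2v (delta_mx 0 i).

Lemma r2v_sum (r : 'rV[rat]_n) : r2v r = \sum_i r 0 i *: bb i.
Proof. by rewrite {1}(row_sum_delta r) linear_sum; apply: eq_bigr => i _; rewrite linearZ. Qed.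

Lemma coordK (x : K) : x = \sum_i (v2r x) 0 i *: bb i.
Proof. by rewrite -r2v_sum v2rK. Qed.

Definition Mx (x : K) : 'M[rat]_n := \matrix_(i, j) v2r (bb i * x) 0 j.

Lemma row_Mx x i : row i (Mx x) = v2r (bb i * x).
Proof. by apply/rowP => j; rewrite !mxE. Qed.

Lemma mul_Mx (r : 'rV[rat]_n) x : r *m Mx x = v2r (r2v r * x).
Proof.
rewrite mulmx_sum_row r2v_sum mulr_suml linear_sum; apply: eq_bigr => i _.
by rewrite row_Mx -scalerAl linearZ.
Qed.

Lemma Mx_mul x y : Mx (x * y) = Mx x *m Mx y.
Proof.
apply/row_matrixP => i; rewrite row_mul !row_Mx mul_Mx v2rK.
by rewrite mulrA.
Qed.

Lemma Mx1 : Mx 1 = 1%:M.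
Proof.
apply/row_matrixP => i; rewrite row_Mx row1 mulr1 /bb r2vK //.
Qed.

Lemma Mx_add x y : Mx (x + y) = Mx x + Mx y.
Proof. by apply/matrixP => i j; rewrite !mxE mulrDr linearD /= mxE. Qed.

Lemma Mx0 : Mx 0 = 0.
Proof. by apply/matrixP => i j; rewrite !mxE mulr0 linear0 mxE. Qed.

Lemma Mx_scale (a : rat) x : Mx (a *: x) = a *: Mx x.
Proof. by apply/matrixP => i j; rewrite !mxE -scalerAr linearZ /= mxE. Qed.

Definition Tr (x : K) : rat := \tr (Mx x).

Lemma Tr_add x y : Tr (x + y) = Tr x + Tr y.
Proof. by rewrite /Tr Mx_add mxtraceD. Qed.

Lemma Tr_scale (a : rat) x : Tr (a *: x) = a * Tr x.
Proof. by rewrite /Tr Mx_scale mxtraceZ. Qed.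

Lemma Tr1 : Tr 1 = n%:R.
Proof. by rewrite /Tr Mx1 mxtrace1. Qed.

Lemma Tr_sum I (r : seq I) (F : I -> K) : Tr (\sum_(i <- r) F i) = \sum_(i <- r) Tr (F i).
Proof.
apply: (big_morph Tr Tr_add); by rewrite /Tr Mx0 mxtrace0.
Qed.

Local Notation ratC := (ratr : rat -> algC).

Lemma Tr_integ x : integ x -> Tr x \is a Num.int.
Proof.
move=> [p monp rootp].
pose A := map_mx ratC (Mx x).
have hroot : forall z, root (char_poly A) z -> root (map_poly (intr : int -> algC) p) z.
  move=> z; rewrite -eigenvalue_root_char => /eigenvalueP [v Ev vnz].
  have hpow k : v *m map_mx ratC (Mx (x ^+ k)) = z ^+ k *: v.
    elim: k => [|k IH]; first by rewrite expr0 Mx1 map_scalar_mx rmorph1 mulmx1 scale1r.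
    by rewrite exprSr Mx_mul map_mxM mulmxA IH -scalemxAl Ev scalerA exprSr.
  pose f y := v *m map_mx ratC (Mx y).
  have f_add : {morph f : a b / a + b}.
    by move=> a b; rewrite /f Mx_add map_mxD mulmxDr.
  have f0 : f 0 = 0 by rewrite /f Mx0 map_mx0 mulmx0.
  have := rootP rootp; rewrite (horner_coef_wide _ (size_mapZ K p)) => E.
  have : f 0 = ((map_poly (intr : int -> algC) p).[z]) *: v.
    rewrite -E (big_morph f f_add f0) (horner_coef_wide _ (size_poly _ _)).
    rewrite scaler_suml; apply: eq_bigr => i _; rewrite coef_map /= coef_map /=.
    have -> : intK p`_i * x ^+ i = (p`_i)%:~R *: x ^+ i.
      by rewrite scaler_int mulrzl.
    rewrite /f Mx_scale map_mxZ -scalemxAr hpow scalerA rmorph_int //.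
  rewrite f0 => /esym /eqP; rewrite scaler_eq0 (negPf vnz) orbF => /eqP h.
  by apply/rootP.
have hAint : forall z, root (char_poly A) z -> z \in Aint.
  move=> z /hroot hz; apply: (root_monic_Aint hz); first exact: monic_map.
  by apply/polyOverP => i; rewrite coef_map /=; apply: rpred_int.
have htr : ratC (Tr x) = \tr A.
  by rewrite /Tr /mxtrace rmorph_sum; apply: eq_bigr => i _; rewrite /A [RHS]mxE.
rewrite -Cint_rat htr; apply: Cint_rat_Aint; first by rewrite -htr Crat_rat.
have [rs Ers] := closed_field_poly_normal (char_poly A).
rewrite (monicP (char_poly_monic A)) scale1r in Ers.
have szrs : size rs = n.
  by have := size_char_poly A; rewrite Ers size_prod_XsubC => -[].
have : \tr A = \sum_(z <- rs) z.
  case: (posnP n) => hn.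
    rewrite /mxtrace; move: (A); rewrite hn => A'.
    by rewrite big_ord0; move: szrs; rewrite hn => /size0nil ->; rewrite big_nil.
  apply: oppr_inj; rewrite -char_poly_trace // Ers -coefPn_prod_XsubC ?szrs //.
  by rewrite -lt0n.
move=> ->; rewrite big_seq; apply: rpred_sum => z zrs; apply: hAint.
by rewrite Ers root_prod_XsubC.
Qed.


Lemma n_gt0 : (0 < n)%N.
Proof.
case: (posnP n) => // hn; exfalso.
have h : v2r (1 : K) != 0.
  by apply/eqP => h; move: (oner_neq0 K); rewrite -(v2rK 1) h linear0 eqxx.
by move/eqP: h; apply; apply/rowP => i; have := ltn_ord i; rewrite {2}hn.
Qed.

Lemma scale_integral (b : K) : exists d : int, d != 0 /\ integ (d%:~R * b).
Proof.
have [q [qn rq _]] := int_relation b.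
exists (lead_coef q); split; first by rewrite lead_coef_eq0.
have hk : size q = (size q).-1.+1 by rewrite prednK // size_poly_gt0.
apply: (@integ_lead K _ b (fun i => q`_i) (size q).-1); first exact: integ_int.
move: rq; rewrite (horner_coef_wide _ (size_mapZ K q)) hk big_ord_recr /= => E.
rewrite addrC -[RHS]E; congr (_ + _).
  by apply: eq_bigr => i _; rewrite coef_map.
by rewrite coef_map lead_coefE.
Qed.

Lemma int_scaleK (d : int) (y : K) : d%:~R * y = (d%:~R : rat) *: y.
Proof. by rewrite scaler_int mulrzl. Qed.

Lemma order_of_integral_aux (S : {pred K}) :
  is_subring S -> (forall x, x \in S -> integ x) -> is_order S.
Proof.
move=> hS Sint.
have hd : forall i : 'I_n, exists d : int, d != 0 /\ integ (d%:~R * bb i).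
  by move=> i; apply: scale_integral.
pose df i := proj1_sig (constructive_indefinite_description _ (hd i)).
have [dnz dint] : (forall i, df i != 0) /\ (forall i, integ ((df i)%:~R * bb i)).
  by split => i; case: (proj2_sig (constructive_indefinite_description _ (hd i))).
pose bI i := (df i)%:~R * bb i.
have coord z : z = \sum_j (v2r z 0 j / (df j)%:~R) *: bI j.
  rewrite {1}(coordK z); apply: eq_bigr => j _; rewrite /bI int_scaleK scalerA.
  by rewrite mulfVK // intr_eq0.
pose D : 'M[rat]_n := \matrix_(i, j) Tr (bI i * bI j).
have TrI : forall y (c : 'rV[rat]_n), (forall j, Tr (y * bI j) = (c *m D) 0 j) ->
   y = \sum_i c 0 i *: bI i -> True by [].
have Tr_comb : forall (c : 'rV[rat]_n) j,
    Tr ((\sum_i c 0 i *: bI i) * bI j) = (c *m D) 0 j.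
  move=> c j; rewrite mulr_suml Tr_sum !mxE; apply: eq_bigr => i _.
  by rewrite -scalerAl Tr_scale mxE.
have hDz : forall i j, exists z : int, D i j = z%:~R.
  move=> i j; apply/intrP; rewrite mxE; apply: Tr_integ; apply: integ_mul; exact: dint.
pose Dz : 'M[int]_n := \matrix_(i, j) proj1_sig (constructive_indefinite_description _ (hDz i j)).
have EDz : D = map_mx intr Dz.
  apply/matrixP => i j; rewrite [RHS]mxE [Dz i j]mxE.
  exact: (proj2_sig (constructive_indefinite_description _ (hDz i j))).
have detD : \det D != 0.
  apply/negP => /det0P [w wnz wD].
  pose y := \sum_i w 0 i *: bI i.
  have Ty : forall j, Tr (y * bI j) = 0 by move=> j; rewrite Tr_comb wD mxE.
  have yTr : forall z, Tr (y * z) = 0.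
    move=> z; rewrite (coord z) mulr_sumr Tr_sum big1 // => j _.
    by rewrite -scalerAr Tr_scale Ty mulr0.
  have ynz : y != 0.
    apply/negP => /eqP y0; move/negP: wnz; apply; apply/eqP/rowP => i.
    have : r2v (\row_j (w 0 j * (df j)%:~R)) = 0.
      rewrite r2v_sum -[RHS]y0; apply: eq_bigr => j _.
      by rewrite mxE /bI int_scaleK scalerA.
    rewrite -(linear0 (@r2v rat K)) => /r2v_inj /rowP /(_ i); rewrite !mxE.
    by move/eqP; rewrite mulf_eq0 intr_eq0 (negPf (dnz i)) orbF => /eqP.
  have := yTr y^-1; rewrite mulfV // Tr1 => /eqP; rewrite pnatr_eq0.
  by move/eqP => h; move: n_gt0; rewrite h.
pose bL i := (\det D)^-1 *: bI i.
have indep : zindep bL.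
  move=> k Ek.
  have : r2v (\row_j ((k j)%:~R * (\det D)^-1 * (df j)%:~R)) = 0.
    rewrite r2v_sum -[RHS]Ek; apply: eq_bigr => j _.
    by rewrite mxE /bL /bI int_scaleK -scaler_int !scalerA.
  rewrite -(linear0 (@r2v rat K)) => /r2v_inj hr i.
  move/rowP: hr => /(_ i); rewrite !mxE => /eqP.
  by rewrite !mulf_eq0 invr_eq0 (negPf detD) !intr_eq0 (negPf (dnz i)) !orbF => /eqP.
have span : forall x, x \in S -> exists k, x = lin bL k.
  move=> x xS.
  pose cx : 'rV[rat]_n := \row_j (v2r x 0 j / (df j)%:~R).
  have hx : x = \sum_i cx 0 i *: bI i.
    by rewrite {1}(coord x); apply: eq_bigr => i _; rewrite mxE.
  have ht : forall j, exists z : int, (cx *m D) 0 j = z%:~R.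
    move=> j; apply/intrP; rewrite -Tr_comb -hx; apply: Tr_integ.
    by apply: integ_mul; [exact: Sint | exact: dint].
  pose tz : 'rV[int]_n := \row_j proj1_sig (constructive_indefinite_description _ (ht j)).
  have Etz : cx *m D = map_mx intr tz.
    apply/rowP => j; rewrite [RHS]mxE [tz 0 j]mxE.
    exact: (proj2_sig (constructive_indefinite_description _ (ht j))).
  have E2 : \det D *: cx = map_mx intr (tz *m \adj Dz).
    rewrite map_mxM /= -Etz -mulmxA EDz map_mx_adj /= -EDz mul_mx_adj.
    by rewrite mul_mx_scalar.
  exists (fun j => (tz *m \adj Dz) 0 j).
  rewrite hx /lin; apply: eq_bigr => i _.
  have h : \det D * cx 0 i = ((tz *m \adj Dz) 0 i)%:~R.
    by have := congr1 (fun M : 'rV[rat]_n => M 0 i) E2; rewrite [in LHS]mxE [in RHS]mxE.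
  by rewrite /bL -scaler_int scalerA -h [\det D * _]mulrC mulfK.
have [m [e [eS ie se]]] := @hermite K n (fun x => x \in S) bL (sr0 hS)
   (fun x y hx hy => srB hS hx hy) indep span.
by exists m, e.
Qed.

End Trace.

Lemma order_of_integral (K : fieldExtType rat) (S : {pred K}) :
  is_subring S -> (forall x, x \in S -> integ x) -> is_order S.
Proof. exact: order_of_integral_aux. Qed.



Section Main.
Variable K : fieldExtType rat.

Lemma good_in (T : {pred K}) a x : is_subring T -> a != 0 -> splits T a -> Good a x -> x \in T.
Proof.
move=> hT a0 [u [v [hu hv huv hua hva]]] [h1 h2 _].
exact: (Zpol_split_mem hT hu hv huv hua hva h1 h2).
Qed.

Lemma integ_subring : is_subring (fun x : K => pb (integ x)).
Proof.
split.
- by apply/pbP; exact: integ1.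
- move=> x y /pbP hx /pbP hy; apply/pbP; apply: integ_add => //; exact: integ_opp.
- by move=> x y /pbP hx /pbP hy; apply/pbP; apply: integ_mul.
Qed.

End Main.

Unset Implicit Arguments.
Local Close Scope ring_scope.

Theorem theorem4p70 (K : fieldExtType rat) (G : {pred K}) :
  is_mult_subgroup G ->
  exists S : {pred K},
    [/\ is_subring S,
        all_gen_invertible G S,
        (* S is the least such subring *)
        (forall T : {pred K}, is_subring T -> all_gen_invertible G T ->
           {subset S <= T}),
        (* and the unique minimal one *)
        (forall T : {pred K}, is_subring T -> all_gen_invertible G T ->
           (forall T' : {pred K}, is_subring T' -> all_gen_invertible G T' ->
              {subset T' <= T} -> T' =i T) ->
           T =i S)
      & is_order S].
Proof.
move=> hG; have G0 := hG.1.
pose P (x : K) := forall T : {pred K}, is_subring T -> (forall a, a \in G -> splits T a) -> x \in T.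
pose S : {pred K} := fun x => pb (P x).
have good_S a x : a \in G -> Good a x -> x \in S.
  move=> aG gx; apply/pbP => T hT hs; apply: (good_in hT (G0 a aG) (hs a aG) gx).
have hS : is_subring S.
  split.
  - by apply/pbP => T hT _; exact: sr1.
  - by move=> x y /pbP hx /pbP hy; apply/pbP => T hT hs; apply: srB => //; [apply: hx | apply: hy].
  - by move=> x y /pbP hx /pbP hy; apply/pbP => T hT hs; apply: srM => //; [apply: hx | apply: hy].
have splitsS : forall a, a \in G -> splits S a.
  move=> a aG; have [u [v [gu gv huv gua gva]]] := good_split (G0 a aG).
  by exists u, v; split=> //; apply: (good_S a).
have validS := splits_valid hG hS splitsS.
have least : forall T : {pred K}, is_subring T -> all_gen_invertible G T -> {subset S <= T}.
  move=> T hT hv x /pbP hx; apply: hx => //; exact: valid_splits.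
exists S; split => //.
- move=> T hT hv hmin x; have := hmin S hS validS (least T hT hv) x.
  by move=> ->.
- apply: order_of_integral => // x /pbP hx.
  suff : x \in (fun y : K => pb (integ y)) by rewrite unfold_in => /pbP.
  apply: hx; first exact: integ_subring.
  move=> a aG; have [u [v [gu gv huv gua gva]]] := good_split (G0 a aG).
  exists u, v; split=> //; rewrite unfold_in; apply/pbP.
  + by case: gu.
  + by case: gv.
  + by case: gua.
  + by case: gva.
Qed.
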